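(* Let $r\geq 1$ and $n_1,\ldots,n_r>1$ be integers, let $R=\mathbb{Z}_{n_1}\oplus\cdots\oplus \mathbb{Z}_{n_r}$, and let $\mathcal{S}_R$ be the multiplicative semigroup of $R$, with its operation written as $+$. Let $a,b\in\mathcal{S}_R$. Then: (i) If $a \leqq_{\mathcal{H}} b$, then $\gcd(\kappa_i(\theta_b),n_i)\mid \gcd(\kappa_i(\theta_a),n_i)$ for each $i\in [1,r]$, and ${\rm St}(b)\subseteq{\rm St}(a)$. (ii) $a \ \mathcal{H} \ b$ if and only if $\gcd(\kappa_i(\theta_b),n_i)= \gcd(\kappa_i(\theta_a),n_i)$ for each $i\in [1,r]$. (iii) Suppose $a <_{\mathcal{H}} b$. If there exists an index $t\in [1,r]$ such that either ${\rm pot}_{p}(\gcd(\kappa_t(\theta_b), n_t))<{\rm pot}_{p}(\gcd(\kappa_t(\theta_a), n_t))$ for some prime $p>2$, or ${\rm pot}_2(\gcd(\kappa_t(\theta_b), n_t))<{\rm pot}_2(\gcd(\kappa_t(\theta_a), n_t))< {\rm pot}_2(n_t)$, then ${\rm St}(b)\subsetneq {\rm St}(a)$.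
   Context: The operation of $\mathcal{S}_R$ is the ring multiplication of $R$, written additively as $+$; its identity element $0_{\mathcal{S}_R}$ is $(\overline{1},\ldots,\overline{1})$, and ${\rm U}(\mathcal{S}_R)$ is its group of units (elements with an inverse under this operation). For ${\bf a}\in\mathcal{S}_R$, $\theta_{\bf a}=(a_1,\ldots,a_r)\in[1,n_1]\times\cdots\times[1,n_r]$ is the unique integer tuple with ${\bf a}=(\overline{a}_1,\ldots,\overline{a}_r)$, and $\kappa_i(\theta_{\bf a})=a_i$. For $c\in\mathcal{S}_R$, ${\rm St}(c)=\{u\in {\rm U}(\mathcal{S}_R): u+c=c\}$. Green's preorder: $a\leqq_{\mathcal{H}} b$ iff $a=b$ or $a=b+c$ for some $c\in\mathcal{S}_R$; $a\ \mathcal{H}\ b$ iff $a\leqq_{\mathcal{H}} b$ and $b\leqq_{\mathcal{H}} a$; $a<_{\mathcal{H}} b$ means $a\leqq_{\mathcal{H}} b$ but not $a\ \mathcal{H}\ b$. For a prime $p$ and nonzero integer $n$, ${\rm pot}_p(n)$ is the largest $k$ with $p^k\mid n$. *)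

(* Defs.v *)
From mathcomp Require Import all_boot.
Set Implicit Arguments. Unset Strict Implicit. Unset Printing Implicit Defensive.

(* R = Z_{n_1} (+) ... (+) Z_{n_r}, indices 'I_r.  An element of S_R is
   represented by its residue vector x with 0 <= x i < n i. *)
Section SR.
Variables (r : nat) (n : 'I_r -> nat).

Definition SR_elt (x : {ffun 'I_r -> nat}) : Prop := forall i, x i < n i.

(* the semigroup operation "+" of S_R (= ring multiplication of R) *)
Definition SR_add (x y : {ffun 'I_r -> nat}) : {ffun 'I_r -> nat} :=
  [ffun i => (x i * y i) %% n i].

Definition SR_zero : {ffun 'I_r -> nat} := [ffun i => 1 %% n i].

Definition SR_unit (u : {ffun 'I_r -> nat}) : Prop :=
  SR_elt u /\ exists v, SR_elt v /\ SR_add u v = SR_zero.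

Definition St (c : {ffun 'I_r -> nat}) (u : {ffun 'I_r -> nat}) : Prop :=
  SR_unit u /\ SR_add u c = c.

(* theta_a, with kappa_i(theta_a) in [1, n_i] *)
Definition kappa_theta (a : {ffun 'I_r -> nat}) (i : 'I_r) : nat :=
  if a i == 0 then n i else a i.

Definition Hle (a b : {ffun 'I_r -> nat}) : Prop :=
  a = b \/ exists c, SR_elt c /\ a = SR_add b c.
Definition Hrel (a b : {ffun 'I_r -> nat}) : Prop := Hle a b /\ Hle b a.
Definition Hlt (a b : {ffun 'I_r -> nat}) : Prop := Hle a b /\ ~ Hrel a b.

End SR.

Definition pot (p m : nat) : nat := logn p m.

(* Main.v *)
Require Import Defs.
From mathcomp Require Import all_boot.
From mathcomp Require Import all_algebra zify ring.
Set Implicit Arguments. Unset Strict Implicit. Unset Printing Implicit Defensive.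

Lemma bez b n : 0 < n -> exists x, x * b = gcdn b n %[mod n].
Proof.
move=> n0; case: (Bezoutr b n0) => a _ /dvdnP [k Hk].
exists (a * n.-1).
case: n n0 Hk => // n' _ Hk /=.
set g := gcdn b n'.+1 in Hk *.
have E : g * n'.+1 + a * n' * b = (k * n') * n'.+1 + g.
  have -> : k * n' * n'.+1 = (k * n'.+1) * n' by ring.
  rewrite -Hk mulnDl mulnSr; ring.
by rewrite -[in LHS](modnMDl g) E modnMDl.
Qed.

Lemma solve a b n : 0 < n -> a < n -> gcdn b n = gcdn a n ->
  exists c, c < n /\ a = (b * c) %% n.
Proof.
move=> n0 an E.
have [x Hx] := bez b n0.
have : gcdn a n %| a by apply: dvdn_gcdl.
rewrite -E => /dvdnP [a' Ha'].
exists ((x * a') %% n); split; first by rewrite ltn_mod.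
rewrite modnMmr mulnA [b * x]mulnC -modnMml Hx modnMml.
by rewrite mulnC -Ha' modn_small.
Qed.

Lemma divmod a c n : 0 < n -> gcdn a n %| gcdn ((a * c) %% n) n.
Proof.
move=> n0; rewrite dvdn_gcd dvdn_gcdr andbT.
rewrite /dvdn (modn_dvdm _ (dvdn_gcdr a n)) -/(dvdn _ _).
by rewrite dvdn_mulr // dvdn_gcdl.
Qed.

Lemma key_gen a b n p s : 0 < n -> a < n -> b < n -> prime p ->
  logn p (gcdn b n) < logn p (gcdn a n) -> 0 < s -> ~~ (p %| s) ->
  ~~ (p %| n`_p^' * (n %/ gcdn a n * s) + 1) ->
  coprime (n`_p^' * (n %/ gcdn a n * s) + 1) n /\
  (n`_p^' * (n %/ gcdn a n * s) + 1) * a %% n = a /\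
  (n`_p^' * (n %/ gcdn a n * s) + 1) * b %% n != b.
Proof.
move=> n0 an bn pp lt s0 ps pU.
set q := n`_p^'. set A := gcdn a n. set m := n %/ A.
have A0 : 0 < A by rewrite gcdn_gt0 n0 orbT.
have An : A %| n by apply: dvdn_gcdr.
have mA : m * A = n by rewrite divnK.
have m0 : 0 < m by rewrite divn_gt0 // dvdn_leq.
have q0 : 0 < q by apply: part_gt0.
have cpq : coprime p q by apply: (pnat_coprime (pnat_id pp)); apply: part_pnat.
split.
  rewrite -(partnC p n0) coprimeMr; apply/andP; split.
    rewrite p_part; case E: (logn p n) => [|k]; first by rewrite expn0 coprimen1.
    by rewrite coprime_pexpr // coprime_sym prime_coprime.
  by rewrite coprime_sym /coprime mulnC gcdnMDl gcdn1.
split.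
  have : A %| a by apply: dvdn_gcdl.
  move=> /dvdnP [a' Ha'].
  have -> : (q * (m * s) + 1) * a = (q * s * a') * n + a.
    by rewrite -mA Ha'; ring.
  by rewrite modnMDl modn_small.
apply/negP => /eqP H.
have Ha_le : logn p A <= logn p n by apply: dvdn_leq_log.
case: (posnP b) => [b0 | b0].
  move: lt Ha_le; rewrite b0 gcd0n -/A; move: (logn p n) (logn p A) => x y; clear; lia.
have : n %| q * (m * s) * b.
  move: H; rewrite mulnDl mul1n => H.
  have : (q * (m * s) * b + b == 0 + b %[mod n]) by rewrite H add0n modn_small.
  by rewrite eqn_modDr mod0n.
move=> Hd.
have pos : 0 < q * (m * s) * b by rewrite !muln_gt0 q0 m0 s0 b0.
have Hl := dvdn_leq_log p pos Hd.
have ms0 : 0 < m * s by rewrite muln_gt0 m0 s0.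
have qms0 : 0 < q * (m * s) by rewrite muln_gt0 q0 ms0.
rewrite (lognM p qms0 b0) (lognM p q0 ms0) (lognM p m0 s0) in Hl.
rewrite (logn_coprime cpq) (logn_coprime (p:=p) (m:=s)) in Hl; last by rewrite prime_coprime.
rewrite /m logn_div // in Hl.
have Lb := logn_gcd p b0 n0.
move: lt; rewrite Lb -/A => lt.
move: Hl lt Ha_le; move: (logn p n) (logn p A) (logn p b) => x y z.
clear; lia.
Qed.

Lemma key a b n p : 0 < n -> a < n -> b < n -> prime p ->
  logn p (gcdn b n) < logn p (gcdn a n) ->
  (2 < p \/ logn p (gcdn a n) < logn p n) ->
  exists U, coprime U n /\ U * a %% n = a /\ U * b %% n != b.
Proof.
move=> n0 an bn pp lt hyp.
have p1 : ~~ (p %| 1) by rewrite dvdn1 neq_ltn prime_gt1 ?orbT.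
set q := n`_p^'. set m := n %/ gcdn a n.
case pm: (p %| m).
  exists (q * (m * 1) + 1); apply: key_gen => //.
  by rewrite dvdn_addr // dvdn_mull // muln1.
have p2 : 2 < p.
  case: hyp => // hl.
  have A0 : 0 < gcdn a n by rewrite gcdn_gt0 n0 orbT.
  have m0 : 0 < m by rewrite divn_gt0 // dvdn_leq // dvdn_gcdr.
  have : p ^ 1 %| m by rewrite pfactor_dvdn // /m logn_div ?dvdn_gcdr //; move: hl; move: (logn p _) (logn p n) => x y; clear; lia.
  by rewrite expn1 pm.
case pU: (p %| q * (m * 1) + 1); last first.
  exists (q * (m * 1) + 1); apply: key_gen => //.
  by rewrite pU.
exists (q * (m * 2) + 1); apply: key_gen => //.
  by apply/negP => /dvdn_leq; move: p2; clear; lia.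
apply/negP => H.
have E : q * (m * 2) + 1 = q * m + (q * (m * 1) + 1) by ring.
rewrite E dvdn_addl // in H.
by move: pU; rewrite muln1 dvdn_addr // (negbTE p1).
Qed.



Section Main.
Variables (r : nat) (n : 'I_r -> nat).
Hypothesis hn : forall i, 1 < n i.

Lemma n0 i : 0 < n i.
Proof. by apply: ltn_trans (hn i). Qed.

Lemma gk x i : gcdn (kappa_theta n x i) (n i) = gcdn (x i) (n i).
Proof. by rewrite /kappa_theta; case: eqP => [->|//]; rewrite gcdnn gcd0n. Qed.

Lemma SR_addA x y z : SR_add n x (SR_add n y z) = SR_add n (SR_add n x y) z.
Proof. by apply/ffunP => i; rewrite !ffunE modnMmr modnMml mulnA. Qed.

Lemma HleI a b : Hle n a b -> forall i, gcdn (b i) (n i) %| gcdn (a i) (n i).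
Proof.
case=> [-> //|[c [_ ->]]] i; rewrite ffunE; exact: divmod (n0 i).
Qed.

Lemma HleSt a b : Hle n a b -> forall u, St n b u -> St n a u.
Proof.
case=> [-> //|[c [_ ->]]] u [Uu Hu]; split => //.
by rewrite SR_addA Hu.
Qed.

Lemma HrelE a b : SR_elt n a -> SR_elt n b ->
  (forall i, gcdn (b i) (n i) = gcdn (a i) (n i)) -> Hle n a b.
Proof.
move=> ha hb E.
have : forall i, exists c, c < n i /\ a i = (b i * c) %% n i.
  by move=> i; apply: solve (n0 i) (ha i) (E i).
case/fin_all_exists => f Hf.
right; exists [ffun i => f i]; split.
  by move=> i; rewrite ffunE; case: (Hf i).
by apply/ffunP => i; rewrite !ffunE; case: (Hf i).
Qed.

End Main.

Theorem lemma2p2 (r : nat) (hr : 0 < r) (n : 'I_r -> nat)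
  (hn : forall i, 1 < n i) (a b : {ffun 'I_r -> nat})
  (ha : SR_elt n a) (hb : SR_elt n b) :
  (* (i) *)
  (Hle n a b ->
     (forall i : 'I_r,
        gcdn (kappa_theta n b i) (n i) %| gcdn (kappa_theta n a i) (n i)) /\
     (forall u, St n b u -> St n a u)) /\
  (* (ii) *)
  (Hrel n a b <->
     (forall i : 'I_r,
        gcdn (kappa_theta n b i) (n i) = gcdn (kappa_theta n a i) (n i))) /\
  (* (iii) *)
  (Hlt n a b ->
     (exists t : 'I_r,
        (exists p, prime p /\ 2 < p /\
           pot p (gcdn (kappa_theta n b t) (n t)) <
           pot p (gcdn (kappa_theta n a t) (n t))) \/
        (pot 2 (gcdn (kappa_theta n b t) (n t)) <
         pot 2 (gcdn (kappa_theta n a t) (n t)) /\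
         pot 2 (gcdn (kappa_theta n a t) (n t)) < pot 2 (n t))) ->
     (forall u, St n b u -> St n a u) /\ (exists u, St n a u /\ ~ St n b u)).
Proof.
have n0 := n0 hn.
split.
  move=> H; split; last exact: HleSt.
  by move=> i; rewrite !gk; apply: HleI.
split.
  split.
    case=> H1 H2 i; rewrite !gk; apply/eqP; rewrite eqn_dvd.
    by rewrite (HleI hn H1) (HleI hn H2).
  move=> E; split; apply: (HrelE hn) => // i; move: (E i); by rewrite !gk => ->.
case=> Hab _ [t Ht]; split; first exact: HleSt.
have [p [pp [lt hyp]]] : exists p, prime p /\
    logn p (gcdn (b t) (n t)) < logn p (gcdn (a t) (n t)) /\
    (2 < p \/ logn p (gcdn (a t) (n t)) < logn p (n t)).
  case: Ht => [[p [pp [p2 lt]]]|[lt lt2]].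
    exists p; split => //; split; last by left.
    by move: lt; rewrite /pot !gk.
  exists 2; move: lt lt2; rewrite /pot !gk => lt lt2.
  by split => //; split => //; right.
have [U [cU [Ua Ub]]] := key (n0 t) (ha t) (hb t) pp lt hyp.
have [x Hx] := bez U (n0 t).
move: cU; rewrite /coprime => /eqP cU; rewrite cU in Hx.
exists [ffun i => if i == t then U %% n i else 1 %% n i]; split.
  split.
    split.
      by move=> i; rewrite ffunE; case: eqP => _; rewrite ltn_mod.
    exists [ffun i => if i == t then x %% n i else 1 %% n i]; split.
      by move=> i; rewrite ffunE; case: eqP => _; rewrite ltn_mod.
    apply/ffunP => i; rewrite !ffunE; case: eqP => [->|_].
      by rewrite modnMml modnMmr mulnC Hx.
    by rewrite modnMml modnMmr muln1.
  apply/ffunP => i; rewrite !ffunE; case: eqP => [->|_].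
    by rewrite modnMml Ua.
  by rewrite modnMml mul1n modn_small.
case=> _ H; have := congr1 (fun f : {ffun 'I_r -> nat} => f t) H; rewrite /= !ffunE eqxx modnMml => E.
by move: Ub; rewrite E eqxx.
Qed.
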